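(* The following hold in $VSPG_n$, with all indices distinct elements of $\{1,\dots,n\}$: (i) If $\max\{i,j\}<\max\{k,l\}$, then $\alpha^{\beta}=\alpha^{\beta^{-1}}=\alpha$ for $\alpha\in\{\mu_{kl},\gamma_{kl}\}$, $\beta\in\{\mu_{ij},\gamma_{ij}\}$. In (ii)–(v) assume $k>\max\{i,j\}$. (ii) $\mu_{ik}^{\mu_{ij}}=\mu_{kj}^{\mu_{ij}}\mu_{ik}\mu_{kj}^{-1}$; $\mu_{ik}^{\mu_{ij}^{-1}}=\mu_{kj}^{-1}\mu_{ik}\mu_{kj}^{\mu_{ij}^{-1}}$; $\mu_{ik}^{\gamma_{ij}}=\gamma_{jk}^{-\gamma_{ij}}\mu_{kj}^{-\gamma_{ij}}\gamma_{kj}^{\gamma_{ij}}\mu_{ik}\mu_{jk}$; $\mu_{ik}^{\bar\gamma_{ij}}=\mu_{jk}\mu_{ik}\gamma_{jk}^{-\bar\gamma_{ij}}\mu_{kj}^{-\bar\gamma_{ij}}\gamma_{kj}^{\bar\gamma_{ij}}$; $\gamma_{ik}^{\mu_{ij}}=\mu_{kj}^{\mu_{ij}}\gamma_{ik}\mu_{kj}^{-1}$; $\gamma_{ik}^{\mu_{ij}^{-1}}=\mu_{kj}^{-1}\gamma_{ik}\mu_{kj}^{\mu_{ij}^{-1}}$. (iii) $\mu_{ki}^{\mu_{ij}}=\mu_{kj}\mu_{ki}\mu_{kj}^{-\mu_{ij}}$; $\mu_{ki}^{\mu_{ij}^{-1}}=\mu_{kj}^{-\mu_{ij}^{-1}}\mu_{ki}\mu_{kj}$;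 $\mu_{ki}^{\gamma_{ij}}=\mu_{kj}\mu_{ki}\mu_{kj}^{-\gamma_{ij}}$; $\mu_{ki}^{\bar\gamma_{ij}}=\mu_{kj}^{-\bar\gamma_{ij}}\mu_{ki}\mu_{kj}$; $\gamma_{ki}^{\mu_{ij}}=\mu_{kj}\gamma_{ki}\mu_{kj}^{-\mu_{ij}}$; $\gamma_{ki}^{\mu_{ij}^{-1}}=\mu_{kj}^{-\mu_{ij}^{-1}}\gamma_{ki}\mu_{kj}$. (iv) $\mu_{jk}^{\mu_{ij}}=\mu_{ik}\mu_{jk}\mu_{kj}\mu_{ik}^{-1}\mu_{kj}^{-\mu_{ij}}$; $\mu_{jk}^{\mu_{ij}^{-1}}=\mu_{kj}^{-\mu_{ij}^{-1}}\mu_{ik}^{-1}\mu_{kj}\mu_{jk}\mu_{ik}$; $\mu_{jk}^{\gamma_{ij}}=\gamma_{jk}^{\gamma_{ij}}\mu_{kj}^{\gamma_{ij}}\gamma_{kj}^{-\gamma_{ij}}$; $\mu_{jk}^{\bar\gamma_{ij}}=\gamma_{jk}^{\bar\gamma_{ij}}\mu_{kj}^{\bar\gamma_{ij}}\gamma_{kj}^{-\bar\gamma_{ij}}$; $\gamma_{jk}^{\mu_{ij}}=\mu_{ik}\gamma_{jk}\mu_{kj}\mu_{ik}^{-1}\mu_{kj}^{-\mu_{ij}}$; $\gamma_{jk}^{\mu_{ij}^{-1}}=\mu_{kj}^{-\mu_{ij}^{-1}}\mu_{ik}^{-1}\mu_{kj}\gamma_{jk}\mu_{ik}$. (v) $\gamma_{kj}^{\mu_{ij}}=\mu_{kj}^{\mu_{ij}}\mu_{ik}\mu_{kj}^{-1}\gamma_{kj}\mu_{ik}^{-1}$;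 $\gamma_{kj}^{\mu_{ij}^{-1}}=\mu_{ik}^{-1}\gamma_{kj}\mu_{kj}^{-1}\mu_{ik}\mu_{kj}^{\mu_{ij}^{-1}}$.
   Context: $VSPG_n$ is the group generated by $\{\mu_{ij},\gamma_{ij}\mid 1\le i\ne j\le n\}$ with defining relations (distinct letters denote distinct indices): $\mu_{ij}\mu_{ik}\mu_{jk}=\mu_{jk}\mu_{ik}\mu_{ij}$; $\mu_{ij}\mu_{ik}\gamma_{jk}=\gamma_{jk}\mu_{ik}\mu_{ij}$; $\gamma_{ij}\mu_{ik}\mu_{jk}=\mu_{jk}\mu_{ik}\gamma_{ij}$; $\mu_{ij}\gamma_{ji}=\gamma_{ij}\mu_{ji}$; $\mu_{ij}\mu_{kl}=\mu_{kl}\mu_{ij}$, $\gamma_{ij}\gamma_{kl}=\gamma_{kl}\gamma_{ij}$, $\mu_{ij}\gamma_{kl}=\gamma_{kl}\mu_{ij}$. (It is the kernel of the permutation homomorphism on the virtual singular braid group $VSG_n$, and $\mu_{ij},\gamma_{ij}$ are the generalized fusing strings.) Notation: $\bar\gamma_{ij}:=\gamma_{ij}^{-1}$; $a^b:=b^{-1}ab$; $a^{-b}:=(a^{-1})^b$. *)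

(* Defs.v *)
From Stdlib Require Import Arith.

Record Grp := {
  car :> Type;
  gmul : car -> car -> car;
  gone : car;
  ginv : car -> car;
  gmulA : forall a b c, gmul a (gmul b c) = gmul (gmul a b) c;
  gmul1g : forall a, gmul gone a = a;
  gmulg1 : forall a, gmul a gone = a;
  gmulVg : forall a, gmul (ginv a) a = gone;
  gmulgV : forall a, gmul a (ginv a) = gone
}.

Arguments gmul {g} _ _.
Arguments gone {g}.
Arguments ginv {g} _.

Declare Scope grp_scope.
Delimit Scope grp_scope with grp.
Notation "x * y" := (gmul x y) (at level 40, left associativity) : grp_scope.
Local Open Scope grp_scope.

(* a^b := b^{-1} a b *)
Definition cj {G : Grp} (a b : G) : G := ginv b * a * b.
(* a^{-b} := (a^{-1})^b *)
Definition cjn {G : Grp} (a b : G) : G := cj (ginv a) b.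

Definition idx (n i : nat) : Prop := (1 <= i /\ i <= n)%nat.

Definition VSPG_rels (G : Grp) (n : nat) (mu gam : nat -> nat -> G) : Prop :=
  (forall i j k, idx n i -> idx n j -> idx n k -> i <> j -> i <> k -> j <> k ->
     mu i j * mu i k * mu j k = mu j k * mu i k * mu i j /\
     mu i j * mu i k * gam j k = gam j k * mu i k * mu i j /\
     gam i j * mu i k * mu j k = mu j k * mu i k * gam i j) /\
  (forall i j, idx n i -> idx n j -> i <> j ->
     mu i j * gam j i = gam i j * mu j i) /\
  (forall i j k l, idx n i -> idx n j -> idx n k -> idx n l ->
     i <> j -> i <> k -> i <> l -> j <> k -> j <> l -> k <> l ->
     mu i j * mu k l = mu k l * mu i j /\
     gam i j * gam k l = gam k l * gam i j /\
     mu i j * gam k l = gam k l * mu i j).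

(* Main.v *)
Require Import Defs.
From Stdlib Require Import Arith.
Local Open Scope grp_scope.

Section H.
Variable G : Grp.
Implicit Types a b c x y : G.
Lemma ginv_mul a b : ginv (a * b) = ginv b * ginv a.
Proof.
  rewrite <- (gmul1g _ (ginv (a*b))).
  rewrite <- (gmulVg _ b) at 1.
  rewrite <- (gmulg1 _ (ginv b)) at 1. rewrite <- (gmulVg _ a).
  rewrite !gmulA. rewrite <- (gmulA _ _ a b). rewrite <- (gmulA _ _ (a*b)).
  rewrite gmulgV, gmulg1. reflexivity.
Qed.
Lemma ginv_inv a : ginv (ginv a) = a.
Proof.
  rewrite <- (gmul1g _ (ginv (ginv a))). rewrite <- (gmulgV _ a).
  rewrite <- gmulA, gmulgV, gmulg1. reflexivity.
Qed.
Lemma mulKV a b : a * (ginv a * b) = b.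
Proof. rewrite gmulA, gmulgV, gmul1g. reflexivity. Qed.
Lemma mulVK a b : ginv a * (a * b) = b.
Proof. rewrite gmulA, gmulVg, gmul1g. reflexivity. Qed.
Lemma ginv_one : ginv (@gone G) = gone.
Proof. rewrite <- (gmul1g _ (ginv gone)). apply gmulgV. Qed.
End H.

Ltac gnorm := unfold cj, cjn in *;
  repeat (first [ rewrite ginv_mul | rewrite ginv_inv | rewrite ginv_one
                | rewrite <- gmulA | rewrite mulKV | rewrite mulVK
                | rewrite gmulgV | rewrite gmulVg | rewrite gmul1g | rewrite gmulg1 ]).

Section H2.
Variable G : Grp.
Implicit Types a b c d e f x y w : G.
Lemma to_one x y : x * ginv y = gone -> x = y.
Proof. intro H. rewrite <- (gmulg1 _ x), <- (gmulVg _ y), gmulA, H, gmul1g. reflexivity. Qed.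
Lemma rot x y : y * x = gone -> x * y = gone.
Proof. intro H. assert (E: y = ginv x).
  { rewrite <- (gmulg1 _ y), <- (gmulgV _ x), gmulA, H, gmul1g. reflexivity. }
  rewrite E; apply gmulgV. Qed.
Lemma tail3 a b c d e f : a*b*c = d*e*f -> forall w, a*(b*(c*w)) = d*(e*(f*w)).
Proof. intros H w. rewrite !gmulA, H. reflexivity. Qed.
Lemma tail3i a b c d e f : a*b*c = d*e*f -> forall w, ginv c*(ginv b*(ginv a*w)) = ginv f*(ginv e*(ginv d*w)).
Proof. intros H w. assert (K: ginv (a*b*c) = ginv (d*e*f)) by (rewrite H; reflexivity).
 rewrite !ginv_mul, !gmulA in K. rewrite !gmulA, K. reflexivity. Qed.
Lemma tail2 a b c d : a*b = c*d -> forall w, a*(b*w) = c*(d*w).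
Proof. intros H w. rewrite !gmulA, H. reflexivity. Qed.
Lemma tail2i a b c d : a*b = c*d -> forall w, ginv b*(ginv a*w) = ginv d*(ginv c*w).
Proof. intros H w. assert (K: ginv (a*b) = ginv (c*d)) by (rewrite H; reflexivity).
 rewrite !ginv_mul in K. rewrite !gmulA, K. reflexivity. Qed.
End H2.

Ltac gnorm' :=
  repeat (first [ rewrite ginv_mul | rewrite ginv_inv | rewrite ginv_one
                | rewrite <- gmulA | rewrite mulKV | rewrite mulVK
                | rewrite gmulgV | rewrite gmulVg | rewrite gmul1g | rewrite gmulg1 ]).
Ltac rots n tac := match n with
  | O => tac
  | S ?n' => first [ tac | apply rot; gnorm'; rots n' tac ] end.
Ltac fin := rots constr:(20) ltac:(idtac; reflexivity).
Ltac rw1 E tac := first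
  [ rewrite (tail3 _ _ _ _ _ _ _ E); gnorm'; tac
  | rewrite (tail3 _ _ _ _ _ _ _ (eq_sym E)); gnorm'; tac
  | rewrite (tail3i _ _ _ _ _ _ _ E); gnorm'; tac
  | rewrite (tail3i _ _ _ _ _ _ _ (eq_sym E)); gnorm'; tac
  | rewrite (tail2 _ _ _ _ _ E); gnorm'; tac
  | rewrite (tail2 _ _ _ _ _ (eq_sym E)); gnorm'; tac
  | rewrite (tail2i _ _ _ _ _ E); gnorm'; tac
  | rewrite (tail2i _ _ _ _ _ (eq_sym E)); gnorm'; tac ].
Ltac prep := unfold cjn, cj; apply to_one; gnorm'.
Ltac s1 E := prep; rots constr:(20) ltac:(idtac; rw1 E ltac:(idtac; fin)).
Ltac s2 E F := prep; rots constr:(20) ltac:(idtac; rw1 E ltac:(idtac; rots constr:(20) ltac:(idtac; rw1 F ltac:(idtac; fin)))).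

Theorem mainTheorem8 (G : Grp) (n : nat) (m g : nat -> nat -> G) :
  VSPG_rels G n m g ->
  (* (i) *)
  (forall i j k l, idx n i -> idx n j -> idx n k -> idx n l ->
     i <> j -> i <> k -> i <> l -> j <> k -> j <> l -> k <> l ->
     (Nat.max i j < Nat.max k l)%nat ->
     forall a b : G, (a = m k l \/ a = g k l) -> (b = m i j \/ b = g i j) ->
       cj a b = a /\ cj a (ginv b) = a) /\
  (forall i j k, idx n i -> idx n j -> idx n k ->
     i <> j -> i <> k -> j <> k -> (Nat.max i j < k)%nat ->
     (* (ii) *)
     (cj (m i k) (m i j) = cj (m k j) (m i j) * m i k * ginv (m k j) /\
      cj (m i k) (ginv (m i j)) = ginv (m k j) * m i k * cj (m k j) (ginv (m i j)) /\
      cj (m i k) (g i j) = cjn (g j k) (g i j) * cjn (m k j) (g i j) * cj (g k j) (g i j)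
                             * m i k * m j k /\
      cj (m i k) (ginv (g i j)) = m j k * m i k * cjn (g j k) (ginv (g i j))
                             * cjn (m k j) (ginv (g i j)) * cj (g k j) (ginv (g i j)) /\
      cj (g i k) (m i j) = cj (m k j) (m i j) * g i k * ginv (m k j) /\
      cj (g i k) (ginv (m i j)) = ginv (m k j) * g i k * cj (m k j) (ginv (m i j))) /\
     (* (iii) *)
     (cj (m k i) (m i j) = m k j * m k i * cjn (m k j) (m i j) /\
      cj (m k i) (ginv (m i j)) = cjn (m k j) (ginv (m i j)) * m k i * m k j /\
      cj (m k i) (g i j) = m k j * m k i * cjn (m k j) (g i j) /\
      cj (m k i) (ginv (g i j)) = cjn (m k j) (ginv (g i j)) * m k i * m k j /\
      cj (g k i) (m i j) = m k j * g k i * cjn (m k j) (m i j) /\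
      cj (g k i) (ginv (m i j)) = cjn (m k j) (ginv (m i j)) * g k i * m k j) /\
     (* (iv) *)
     (cj (m j k) (m i j) = m i k * m j k * m k j * ginv (m i k) * cjn (m k j) (m i j) /\
      cj (m j k) (ginv (m i j)) = cjn (m k j) (ginv (m i j)) * ginv (m i k) * m k j
                                    * m j k * m i k /\
      cj (m j k) (g i j) = cj (g j k) (g i j) * cj (m k j) (g i j) * cjn (g k j) (g i j) /\
      cj (m j k) (ginv (g i j)) = cj (g j k) (ginv (g i j)) * cj (m k j) (ginv (g i j))
                                    * cjn (g k j) (ginv (g i j)) /\
      cj (g j k) (m i j) = m i k * g j k * m k j * ginv (m i k) * cjn (m k j) (m i j) /\
      cj (g j k) (ginv (m i j)) = cjn (m k j) (ginv (m i j)) * ginv (m i k) * m k j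
                                    * g j k * m i k) /\
     (* (v) *)
     (cj (g k j) (m i j) = cj (m k j) (m i j) * m i k * ginv (m k j) * g k j * ginv (m i k) /\
      cj (g k j) (ginv (m i j)) = ginv (m i k) * g k j * ginv (m k j) * m i k
                                    * cj (m k j) (ginv (m i j)))).
Proof.
intros HR. destruct HR as [R123 [R4 R5]]. split.
- intros i j k l Hi Hj Hk Hl Hij Hik Hil Hjk Hjl Hkl Hmax a b Ha Hb.
  destruct (R5 i j k l Hi Hj Hk Hl Hij Hik Hil Hjk Hjl Hkl) as [E1 [E2 E3]].
  destruct (R5 k l i j Hk Hl Hi Hj Hkl (not_eq_sym Hik) (not_eq_sym Hjk)
              (not_eq_sym Hil) (not_eq_sym Hjl) Hij) as [_ [_ E4]].
  clear R123 R4 R5.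
  destruct Ha as [Ha|Ha]; destruct Hb as [Hb|Hb]; subst a b; split;
    first [s1 E1 | s1 E2 | s1 E3 | s1 E4].
- intros i j k Hi Hj Hk Hij Hik Hjk Hmax.
  assert (Hji := not_eq_sym Hij). assert (Hki := not_eq_sym Hik). assert (Hkj := not_eq_sym Hjk).
  destruct (R123 i j k Hi Hj Hk Hij Hik Hjk) as [A1 [A2 A3]].
  destruct (R123 i k j Hi Hk Hj Hik Hij Hkj) as [B1 [B2 B3]].
  destruct (R123 k i j Hk Hi Hj Hki Hkj Hij) as [C1 [C2 C3]].
  pose proof (R4 j k Hj Hk Hjk) as D1.
  pose proof (R4 k j Hk Hj Hkj) as D2.
  clear R123 R4 R5.
  split; [|split; [|split]].
  + split; [s1 B1|]. split; [s1 B1|]. split; [s2 A3 D2|]. split; [s2 A3 D2|]. split; [s1 B3| s1 B3].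
  + split; [s1 C1|]. split; [s1 C1|]. split; [s1 C2|]. split; [s1 C2|]. split; [s1 C3| s1 C3].
  + split; [s2 A1 B1|]. split; [s2 A1 B1|]. split; [s1 D1|]. split; [s1 D1|]. split; [s2 A2 B1| s2 A2 B1].
  + split; [s2 B1 B2| s2 B1 B2].
Qed.
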